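(* Let $G$ be a graph, $x\in V(G)$ and $N_G(x)=Y\cup Z$ a partition into disjoint (possibly empty) sets. Then $\operatorname{Ind}(\mathcal{L}_x(G;Y,Z))$ is homotopy equivalent to the (unreduced) suspension $\Sigma\operatorname{Ind}(G)$.
   Context: $\operatorname{Ind}(G)$ is the independence complex of $G$. The Lozin transform $\mathcal{L}_x(G;Y,Z)$: delete $x$, add four new vertices $y,a,b,z$ with edges $ya,ab,bz$, and join $y$ to every vertex of $Y$ and $z$ to every vertex of $Z$. *)

(* Defs.v *)
From HB Require Import structures.
From mathcomp Require Import all_boot.
From Stdlib Require Import Reals.

Set Implicit Arguments.
Unset Strict Implicit.
Unset Printing Implicit Defensive.

Definition simple_graph (V : finType) (e : rel V) : Prop :=
  symmetric e /\ irreflexive e.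

(* Abstract simplicial complexes on V are represented by their predicate of faces. *)

Definition Ind (V : finType) (e : rel V) (s : {set V}) : Prop :=
  forall u v, u \in s -> v \in s -> ~~ e u v.

(* Unreduced (simplicial) suspension S^0 * K, with the two cone points
   inr true, inr false. Its realization is homeomorphic to the unreduced
   suspension of |K|. *)
Definition suspension (V : finType) (K : {set V} -> Prop)
  (s : {set (V + bool)}) : Prop :=
  K [set v | inl v \in s] /\
  ~ ((inr true : V + bool) \in s /\ (inr false : V + bool) \in s).

(* Geometric realization inside R^V (barycentric coordinates). *)
Definition realization (V : finType) (K : {set V} -> Prop) (p : V -> R) : Prop :=
  (forall v, (0 <= p v)%R) /\
  \big[Rplus/0%R]_(v : V) p v = 1%R /\
  exists s, K s /\ forall v, p v <> 0%R -> v \in s.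

Definition close (V : finType) (p q : V -> R) (d : R) : Prop :=
  forall v, (Rabs (p v - q v) < d)%R.

Definition maps_into (V W : finType) (X : (V -> R) -> Prop) (Y : (W -> R) -> Prop)
  (f : (V -> R) -> (W -> R)) : Prop :=
  forall p, X p -> Y (f p).

Definition continuous_on (V W : finType) (X : (V -> R) -> Prop)
  (f : (V -> R) -> (W -> R)) : Prop :=
  forall p, X p -> forall eps, (0 < eps)%R ->
    exists delta, (0 < delta)%R /\
      forall q, X q -> close p q delta -> close (f p) (f q) eps.

Definition homotopic (V W : finType) (X : (V -> R) -> Prop) (Y : (W -> R) -> Prop)
  (f g : (V -> R) -> (W -> R)) : Prop :=
  exists H : R -> (V -> R) -> (W -> R),
    (forall t p, (0 <= t <= 1)%R -> X p -> Y (H t p)) /\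
    (forall p, X p -> forall w, H 0%R p w = f p w /\ H 1%R p w = g p w) /\
    (forall t p, (0 <= t <= 1)%R -> X p -> forall eps, (0 < eps)%R ->
       exists delta, (0 < delta)%R /\
         forall t' q, (0 <= t' <= 1)%R -> X q ->
           (Rabs (t - t') < delta)%R -> close p q delta ->
           close (H t p) (H t' q) eps).

Definition homotopy_equivalent (V W : finType) (X : (V -> R) -> Prop)
  (Y : (W -> R) -> Prop) : Prop :=
  exists (f : (V -> R) -> (W -> R)) (g : (W -> R) -> (V -> R)),
    maps_into X Y f /\ maps_into Y X g /\
    continuous_on X f /\ continuous_on Y g /\
    homotopic X X (fun p => g (f p)) (fun p => p) /\
    homotopic Y Y (fun q => f (g q)) (fun q => q).

(* Vertex type of the Lozin transform: V minus x, plus four new vertices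
   0 = y, 1 = a, 2 = b, 3 = z. *)
Definition LV (V : finType) (x : V) : finType := ({v : V | v != x} + 'I_4)%type.

Definition lozin_rel (V : finType) (e : rel V) (x : V) (Y Z : {set V}) : rel (LV x) :=
  fun a b =>
    match a, b with
    | inl u, inl w => e (val u) (val w)
    | inl u, inr i => ((val i == 0) && (val u \in Y)) || ((val i == 3) && (val u \in Z))
    | inr i, inl u => ((val i == 0) && (val u \in Y)) || ((val i == 3) && (val u \in Z))
    | inr i, inr j => (val i == (val j).+1) || (val j == (val i).+1)
    end.

Arguments lozin_rel {V} e x Y Z : rename.

(* Main.v *)
Require Import Defs.
From HB Require Import structures.
From mathcomp Require Import all_boot.
From Stdlib Require Import Reals Lra.

Set Implicit Arguments.
Unset Strict Implicit.
Unset Printing Implicit Defensive.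

Lemma RplusA : associative Rplus. Proof. by move=> a b c; rewrite Rplus_assoc. Qed.
HB.instance Definition _ := Monoid.isComLaw.Build R 0%R Rplus RplusA Rplus_comm Rplus_0_l.

Local Open Scope R_scope.

Definition nz (r : R) : bool := if Req_EM_T r 0 then false else true.
Lemma nzP r : nz r <-> r <> 0.
Proof. rewrite /nz; case: Req_EM_T => H; split => //. Qed.

Definition supp (T : finType) (p : T -> R) : {set T} := [set w | nz (p w)].
Lemma in_supp (T : finType) (p : T -> R) w : (w \in supp p) <-> p w <> 0.
Proof. rewrite inE; apply: nzP. Qed.

Definition downclosed (T : finType) (K : {set T} -> Prop) :=
  forall s t : {set T}, K s -> t \subset s -> K t.

Lemma real_supp (T : finType) (K : {set T} -> Prop) p :
  downclosed K -> realization K p -> K (supp p).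
Proof.
move=> dK [_ [_ [s [Ks Hs]]]]; apply: dK Ks _.
by apply/subsetP => w /in_supp; apply: Hs.
Qed.

Lemma real_intro (T : finType) (K : {set T} -> Prop) p :
  (forall v, 0 <= p v) -> \big[Rplus/0]_v p v = 1 -> K (supp p) -> realization K p.
Proof.
move=> H1 H2 H3; split => //; split => //; exists (supp p); split => // v Hv.
by apply/in_supp.
Qed.

Lemma real_ext (T : finType) (K : {set T} -> Prop) p q :
  (forall w, p w = q w) -> realization K p -> realization K q.
Proof.
move=> E [H1 [H2 [s [Ks Hs]]]]; split; first by move=> v; rewrite -E.
split; first by rewrite -H2; apply: eq_bigr => i _; rewrite E.
exists s; split => // v; rewrite -E; apply: Hs.
Qed.

Lemma sum_nonneg (T : finType) (P : pred T) (p : T -> R) :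
  (forall v, 0 <= p v) -> 0 <= \big[Rplus/0]_(v | P v) p v.
Proof.
move=> H; apply: (big_ind (fun r => 0 <= r)) => //; [lra | move=> a b; lra].
Qed.

Lemma real_bound (T : finType) (K : {set T} -> Prop) p v :
  realization K p -> 0 <= p v <= 1.
Proof.
move=> [H1 [H2 _]]; split => //.
move: H2; rewrite (bigD1 v) //= => H2.
have := sum_nonneg (fun i => i != v) H1; lra.
Qed.

Lemma sum_comb (T : finType) (a b : T -> R) c :
  \big[Rplus/0]_w (a w + c * (b w - a w)) =
  \big[Rplus/0]_w a w + c * (\big[Rplus/0]_w b w - \big[Rplus/0]_w a w).
Proof.
apply: (big_rec3 (fun y1 y2 y3 => y3 = y1 + c * (y2 - y1))); first ring.
by move=> i y1 y2 y3 _ ->; ring.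
Qed.

Lemma real_comb (T : finType) (K : {set T} -> Prop) a b c :
  0 <= c <= 1 -> realization K a -> realization K b ->
  K (supp a :|: supp b) -> realization K (fun w => a w + c * (b w - a w)).
Proof.
move=> Hc [Ha1 [Ha2 _]] [Hb1 [Hb2 _]] HK; split.
  move=> v; have Hav := Ha1 v; have Hbv := Hb1 v.
  have : 0 <= (1 - c) * a v by apply: Rmult_le_pos; lra.
  have : 0 <= c * b v by apply: Rmult_le_pos; lra.
  replace (a v + c * (b v - a v)) with ((1 - c) * a v + c * b v) by ring; lra.
split; first by rewrite sum_comb Ha2 Hb2; ring.
exists (supp a :|: supp b); split => // v Hv; rewrite inE.
case: (Req_EM_T (a v) 0) => Ea.
  apply/orP; right; apply/in_supp => Eb; apply: Hv.
  by rewrite Ea Eb; ring.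
by apply/orP; left; apply/in_supp.
Qed.
Definition lip (T U : finType) (C : R) (F : (T -> R) -> (U -> R)) :=
  forall p q d, 0 < d -> close p q d -> close (F p) (F q) (C * d).

Lemma lip_cont (T U : finType) (X : (T -> R) -> Prop) C (F : (T -> R) -> (U -> R)) :
  0 < C -> lip C F -> continuous_on X F.
Proof.
move=> HC HF p _ eps He; exists (eps / C); split.
  by apply: Rdiv_lt_0_compat.
move=> q _ Hpq; have := HF p q (eps / C) (Rdiv_lt_0_compat _ _ He HC) Hpq.
by have -> : C * (eps / C) = eps by field; lra.
Qed.

Lemma lip_comp (T U W : finType) C1 C2 (F : (T -> R) -> (U -> R)) (G : (U -> R) -> (W -> R)) :
  0 < C1 -> lip C1 F -> lip C2 G -> lip (C2 * C1) (fun p => G (F p)).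
Proof.
move=> H1 HF HG p q d Hd Hpq.
rewrite Rmult_assoc; apply: HG; first by apply: Rmult_lt_0_compat.
by apply: HF.
Qed.

Lemma lip_id (T : finType) : lip 1 (fun p : T -> R => p).
Proof. by move=> p q d _ H; rewrite Rmult_1_l. Qed.

Lemma lip_mono (T U : finType) C1 C2 (F : (T -> R) -> (U -> R)) :
  C1 <= C2 -> lip C1 F -> lip C2 F.
Proof.
move=> HC HF p q d Hd Hpq v; have := HF p q d Hd Hpq v.
have : C1 * d <= C2 * d by apply: Rmult_le_compat_r; lra.
lra.
Qed.

Lemma prod_bound a a' x x' :
  Rabs a <= 1 -> Rabs x' <= 1 -> Rabs (a * x - a' * x') <= Rabs (x - x') + Rabs (a - a').
Proof.
move=> Ha Hx.
have -> : a * x - a' * x' = a * (x - x') + (a - a') * x' by ring.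
apply: Rle_trans; first by apply: Rabs_triang.
rewrite !Rabs_mult.
have := Rabs_pos (x - x'); have := Rabs_pos (a - a'); have := Rabs_pos a; have := Rabs_pos x'.
nra.
Qed.

Definition alpha (t : R) := Rmin (2 * t) 1.
Definition beta (t : R) := Rmax (2 * t - 1) 0.

Ltac mm := unfold Rmin, Rmax in *;
  repeat match goal with
  | |- context [Rle_dec ?a ?b] => destruct (Rle_dec a b)
  | H : context [Rle_dec ?a ?b] |- _ => destruct (Rle_dec a b)
  end.

Lemma alpha_bd t : 0 <= t <= 1 -> Rabs (alpha t) <= 1.
Proof. move=> Ht; rewrite /alpha; apply: Rabs_le; mm; lra. Qed.
Lemma beta_bd t : 0 <= t <= 1 -> Rabs (beta t) <= 1.
Proof. move=> Ht; rewrite /beta; apply: Rabs_le; mm; lra. Qed.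
Lemma alpha_lip t t' : Rabs (alpha t - alpha t') <= 2 * Rabs (t - t').
Proof.
rewrite /alpha; have := Rabs_pos (t - t'); unfold Rabs; repeat case: Rcase_abs; mm; lra.
Qed.
Lemma beta_lip t t' : Rabs (beta t - beta t') <= 2 * Rabs (t - t').
Proof.
rewrite /beta; have := Rabs_pos (t - t'); unfold Rabs; repeat case: Rcase_abs; mm; lra.
Qed.

Lemma diff_bd (T : finType) (K : {set T} -> Prop) a b v :
  realization K a -> realization K b -> Rabs (b v - a v) <= 1.
Proof.
move=> Ha Hb; have := real_bound v Ha; have := real_bound v Hb => ??.
apply: Rabs_le; lra.
Qed.

Lemma homot3 (T : finType) (K : {set T} -> Prop) L (A B C : (T -> R) -> (T -> R)) :
  1 <= L -> lip L A -> lip L B -> lip L C ->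
  (forall p, realization K p -> realization K (A p)) ->
  (forall p, realization K p -> realization K (B p)) ->
  (forall p, realization K p -> realization K (C p)) ->
  (forall p, realization K p -> K (supp (A p) :|: supp (B p))) ->
  (forall p, realization K p -> K (supp (B p) :|: supp (C p))) ->
  homotopic (realization K) (realization K) A C.
Proof.
move=> HL LA LB LC RA RB RC S1 S2.
exists (fun t p w => A p w + alpha t * (B p w - A p w) + beta t * (C p w - B p w)).
split; [|split].
- move=> t p Ht Hp; case: (Rle_dec t (1/2)) => Ht2.
    have Ea : alpha t = 2 * t by rewrite /alpha; mm; lra.
    have Eb : beta t = 0 by rewrite /beta; mm; lra.
    apply: (real_ext (p := fun w => A p w + (2 * t) * (B p w - A p w))).
      by move=> w; rewrite Ea Eb; ring.
    by apply: real_comb => //; [lra | apply: RA | apply: RB | apply: S1].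
  have Ea : alpha t = 1 by rewrite /alpha; mm; lra.
  have Eb : beta t = 2 * t - 1 by rewrite /beta; mm; lra.
  apply: (real_ext (p := fun w => B p w + (2 * t - 1) * (C p w - B p w))).
    by move=> w; rewrite Ea Eb; ring.
  by apply: real_comb => //; [lra | apply: RB | apply: RC | apply: S2].
- move=> p Hp w; rewrite /alpha /beta; split; mm; try lra; ring.
- move=> t p Ht Hp eps He.
  exists (eps / (5 * L + 4)); split.
    by apply: Rdiv_lt_0_compat; lra.
  move=> t' q Ht' Hq Htt Hpq w.
  set d := eps / (5 * L + 4) in Htt Hpq *.
  have Hd : 0 < d by apply: Rdiv_lt_0_compat; lra.
  have HA := LA p q d Hd Hpq w.
  have HB := LB p q d Hd Hpq w.
  have HC := LC p q d Hd Hpq w.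
  have P1 := @prod_bound (alpha t) (alpha t') (B p w - A p w) (B q w - A q w)
      (alpha_bd Ht) (diff_bd w (RA q Hq) (RB q Hq)).
  have P2 := @prod_bound (beta t) (beta t') (C p w - B p w) (C q w - B q w)
      (beta_bd Ht) (diff_bd w (RB q Hq) (RC q Hq)).
  have Q1 := alpha_lip t t'; have Q2 := beta_lip t t'.
  have E : eps = (5 * L + 4) * d by rewrite /d; field; lra.
  rewrite E.
  set a1 := alpha t * (B p w - A p w) - alpha t' * (B q w - A q w) in P1.
  set a2 := beta t * (C p w - B p w) - beta t' * (C q w - B q w) in P2.
  have -> : A p w + alpha t * (B p w - A p w) + beta t * (C p w - B p w) -
    (A q w + alpha t' * (B q w - A q w) + beta t' * (C q w - B q w)) =
    (A p w - A q w) + a1 + a2 by rewrite /a1 /a2; ring.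
  have R1 : Rabs (B p w - A p w - (B q w - A q w)) <= Rabs (B p w - B q w) + Rabs (A p w - A q w).
    have -> : B p w - A p w - (B q w - A q w) = (B p w - B q w) + - (A p w - A q w) by ring.
    by apply: Rle_trans (Rabs_triang _ _) _; rewrite Rabs_Ropp; lra.
  have R2 : Rabs (C p w - B p w - (C q w - B q w)) <= Rabs (C p w - C q w) + Rabs (B p w - B q w).
    have -> : C p w - B p w - (C q w - B q w) = (C p w - C q w) + - (B p w - B q w) by ring.
    by apply: Rle_trans (Rabs_triang _ _) _; rewrite Rabs_Ropp; lra.
  have T1 := Rabs_triang (A p w - A q w + a1) a2.
  have T2 := Rabs_triang (A p w - A q w) a1.
  have : Rabs (t - t') < d by rewrite /Rabs in Htt *; done.
  move=> Htd.
  have : L * d >= d by nra.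
  lra.
Qed.
Definition o0 : 'I_4 := @Ordinal 4 0 isT.
Definition o1 : 'I_4 := @Ordinal 4 1 isT.
Definition o2 : 'I_4 := @Ordinal 4 2 isT.
Definition o3 : 'I_4 := @Ordinal 4 3 isT.

Lemma sum_I4 (F : 'I_4 -> R) :
  \big[Rplus/0]_(i : 'I_4) F i = F o0 + F o1 + F o2 + F o3.
Proof.
rewrite !big_ord_recl big_ord0 -[RHS]Rplus_0_r !Rplus_assoc.
by congr (F _ + (F _ + (F _ + (F _ + _)))); apply: val_inj.
Qed.

Lemma sum_sub (V : finType) (x : V) (F : V -> R) :
  \big[Rplus/0]_(v | v != x) F v = \big[Rplus/0]_(u : {v : V | v != x}) F (val u).
Proof.
rewrite (reindex_omap (val : {v : V | v != x} -> V) insub); last first.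
  by move=> i Hi; rewrite insubT.
by apply: eq_bigl => -[i Hi] /=; rewrite insubT /= Hi eqxx.
Qed.

Lemma sumLV (V : finType) (x : V) (p : LV x -> R) :
  \big[Rplus/0]_(u : LV x) p u =
  \big[Rplus/0]_(u : {v : V | v != x}) p (inl u) +
  (p (inr o0) + p (inr o1) + p (inr o2) + p (inr o3)).
Proof. by rewrite big_sumType sum_I4. Qed.

Lemma sumW (V : finType) (x : V) (q : V + bool -> R) :
  \big[Rplus/0]_(w : V + bool) q w =
  \big[Rplus/0]_(u : {v : V | v != x}) q (inl (val u)) + q (inl x) +
  q (inr true) + q (inr false).
Proof.
rewrite big_sumType (bigD1 x) //= sum_sub big_bool /=; ring.
Qed.
Definition pos (r : R) := Rmax 0 r.
Definition Fx (py pz : R) := 2 * Rmin py pz.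
Definition FN (pb py pz : R) := pb + py - Rmin py pz.
Definition FS (pa py pz : R) := pa + pz - Rmin py pz.
Definition Gy (n w s : R) := pos (w / 2 - s) + Rmin (2 * n) w.
Definition Ga (n w s : R) := pos (s - w / 2).
Definition Gb (n w s : R) := pos (n - w / 2).
Definition Gz (n w s : R) := pos (w / 2 - n) + Rmin (2 * s) w.
Definition Hz (py pz : R) := pos (Rmin (2 * pz - py) (py + pz)).
Definition Hy (py pz : R) := py + pz - Hz py pz.

Ltac ar := unfold Fx, FN, FS, Gy, Ga, Gb, Gz, Hy, Hz, pos in *; mm; lra.

Lemma AF1 py pa pb pz : 0 <= py -> 0 <= pa -> 0 <= pb -> 0 <= pz ->
  0 <= Fx py pz /\ 0 <= FN pb py pz /\ 0 <= FS pa py pz.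
Proof. move=> *; split; [|split]; ar. Qed.

Lemma AF2 py pz : 0 <= py -> 0 <= pz -> 0 < Fx py pz -> 0 < py /\ 0 < pz.
Proof. move=> *; split; ar. Qed.

Lemma AF3 py pa pb pz : 0 <= py -> 0 <= pa -> 0 <= pb -> 0 <= pz ->
  (py = 0 \/ pa = 0) -> (pa = 0 \/ pb = 0) -> (pb = 0 \/ pz = 0) ->
  FN pb py pz = 0 \/ FS pa py pz = 0.
Proof.
move=> ???? [?|?] [?|?] [?|?]; subst; rewrite /FN /FS; mm; lra.
Qed.

Lemma AG1 n w s : 0 <= n -> 0 <= w -> 0 <= s ->
  0 <= Gy n w s /\ 0 <= Ga n w s /\ 0 <= Gb n w s /\ 0 <= Gz n w s.
Proof. move=> *; split; [|split; [|split]]; ar. Qed.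

Lemma AG2 n w s : 0 <= n -> 0 <= w -> 0 <= s -> (n = 0 \/ s = 0) ->
  Gy n w s + Ga n w s + Gb n w s + Gz n w s = n + w + s.
Proof. move=> ??? [?|?]; subst; ar. Qed.

Lemma AG3 n w s : 0 <= n -> 0 <= w -> 0 <= s ->
  (0 < Gy n w s -> 0 < w) /\ (0 < Gz n w s -> 0 < w).
Proof. move=> *; split => ?; ar. Qed.

Lemma AG4 n w s : 0 <= n -> 0 <= w -> 0 <= s -> (n = 0 \/ s = 0) ->
  (Gy n w s = 0 \/ Ga n w s = 0) /\ (Ga n w s = 0 \/ Gb n w s = 0) /\
  (Gb n w s = 0 \/ Gz n w s = 0).
Proof.
move=> ??? [?|?]; subst; (split; [|split]); unfold Gy, Ga, Gb, Gz, pos in *; mm;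
  first [left; lra | right; lra].
Qed.

Lemma AFG n w s : 0 <= n -> 0 <= w -> 0 <= s -> (n = 0 \/ s = 0) ->
  (0 < Fx (Gy n w s) (Gz n w s) -> 0 < w) /\
  (0 < FN (Gb n w s) (Gy n w s) (Gz n w s) -> 0 < n) /\
  (0 < FS (Ga n w s) (Gy n w s) (Gz n w s) -> 0 < s).
Proof.
move=> ??? [?|?]; subst; (split; [|split]) => ?; ar.
Qed.

Lemma AH py pz : 0 <= py -> 0 <= pz ->
  0 <= Hy py pz /\ 0 <= Hz py pz /\ (0 < Hy py pz -> 0 < py) /\ (0 < Hz py pz -> 0 < pz).
Proof. move=> *; split; [|split; [|split]] => *; ar. Qed.
Lemma I4cases (j : 'I_4) : j = o0 \/ j = o1 \/ j = o2 \/ j = o3.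
Proof.
case: j => [[|[|[|[|j]]]] Hj].
- by left; apply: val_inj.
- by right; left; apply: val_inj.
- by right; right; left; apply: val_inj.
- by right; right; right; apply: val_inj.
- by [].
Qed.

Lemma Vcases (V : finType) (x v : V) : v = x \/ exists u : {v : V | v != x}, v = val u.
Proof.
case E: (v == x); first by left; apply/eqP.
by right; exists (exist _ v (negbT E)).
Qed.

Lemma pos_ne r : 0 <= r -> r <> 0 -> 0 < r.
Proof. move=> H1 H2; case: (Rle_lt_or_eq_dec _ _ H1) => // E; by case: H2. Qed.

Lemma zero_or a b : 0 <= a -> 0 <= b -> (0 < a -> 0 < b -> False) -> a = 0 \/ b = 0.
Proof.
move=> Ha Hb H; case: (Rle_lt_or_eq_dec _ _ Ha) => [Ha'|<-]; last by left.
case: (Rle_lt_or_eq_dec _ _ Hb) => [Hb'|<-]; last by right.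
by case: (H Ha' Hb').
Qed.

Definition nonneg (T : finType) (c : T -> R) := forall w, 0 <= c w.

Lemma real_nonneg (T : finType) K (p : T -> R) : realization K p -> nonneg p.
Proof. by case. Qed.

Lemma K_union (T : finType) (K : {set T} -> Prop) (a b : T -> R) :
  downclosed K -> nonneg a -> nonneg b -> K (supp (fun w => a w + b w)) ->
  K (supp a :|: supp b).
Proof.
move=> dK Ha Hb HK; apply: dK HK _; apply/subsetP => w; rewrite inE => /orP [] /in_supp H;
  apply/in_supp => E; have := Ha w; have := Hb w; have := pos_ne (Ha w); have := pos_ne (Hb w); lra.
Qed.

Lemma Ind_down (T : finType) (r : rel T) : downclosed (Ind r).
Proof. move=> s t Hs /subsetP Hts u v Hu Hv; apply: Hs; by apply: Hts. Qed.

Lemma susp_down (V : finType) (e : rel V) : downclosed (suspension (Ind e)).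
Proof.
move=> s t [Hs1 Hs2] /subsetP Hts; split.
  by move=> u v; rewrite !inE => Hu Hv; apply: Hs1; rewrite inE; apply: Hts.
by move=> [H1 H2]; apply: Hs2; split; apply: Hts.
Qed.

Definition LOK (V : finType) (e : rel V) (x : V) (Y Z : {set V}) (c : LV x -> R) :=
  (forall u v : {v : V | v != x}, 0 < c (inl u) -> 0 < c (inl v) -> ~~ e (val u) (val v)) /\
      (0 < c (inr o0) -> forall u : {v : V | v != x}, val u \in Y -> c (inl u) = 0) /\
      (0 < c (inr o3) -> forall u : {v : V | v != x}, val u \in Z -> c (inl u) = 0) /\
      (c (inr o0) = 0 \/ c (inr o1) = 0) /\
      (c (inr o1) = 0 \/ c (inr o2) = 0) /\
      (c (inr o2) = 0 \/ c (inr o3) = 0).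
Arguments LOK {V} e x Y Z c.

Lemma real_pt (T : finType) (r : rel T) p :
  realization (Ind r) p -> forall u v, 0 < p u -> 0 < p v -> ~~ r u v.
Proof.
move=> [_ [_ [s [Hs Hsub]]]] u v Hu Hv; apply: Hs; apply: Hsub; lra.
Qed.

Lemma LOK_real (V : finType) (e : rel V) (x : V) (Y Z : {set V}) p :
  realization (Ind (lozin_rel e x Y Z)) p -> LOK e x Y Z p.
Proof.
move=> Hp; have H := real_pt Hp; have Hn := real_nonneg Hp;
split; [|split; [|split; [|split; [|split]]]].
- by move=> u v Hu Hv; have := H _ _ Hu Hv.
- move=> Hy u Hu; case: (Rle_lt_or_eq_dec _ _ (Hn (inl u))) => [Hu'|<-] //.
  by have := H _ _ Hu' Hy; rewrite /= Hu.
- move=> Hz u Hu; case: (Rle_lt_or_eq_dec _ _ (Hn (inl u))) => [Hu'|<-] //.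
  by have := H _ _ Hu' Hz; rewrite /= Hu ?orbT.
- by apply: zero_or => // H1 H2; have := H _ _ H1 H2.
- by apply: zero_or => // H1 H2; have := H _ _ H1 H2.
- by apply: zero_or => // H1 H2; have := H _ _ H1 H2.
Qed.

Lemma LOK_Ind (V : finType) (e : rel V) (x : V) (Y Z : {set V}) c :
  nonneg c -> LOK e x Y Z c -> Ind (lozin_rel e x Y Z) (supp c).
Proof.
move=> Hn [H1 [H2 [H3 [H4 [H5 H6]]]]] u v /in_supp Hu /in_supp Hv.
have {}Hu := pos_ne (Hn u) Hu; have {}Hv := pos_ne (Hn v) Hv.
case: u Hu => [u|i] Hu; case: v Hv => [v|j] Hv.
- exact: H1.
- case: (I4cases j) Hv => [->|[->|[->|->]]] Hv //=; rewrite ?orbF.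
  + by apply/negP => Hy; move: Hu; rewrite (H2 Hv u Hy); apply: Rlt_irrefl.
  + by apply/negP => Hz; move: Hu; rewrite (H3 Hv u Hz); apply: Rlt_irrefl.
- case: (I4cases i) Hu => [->|[->|[->|->]]] Hu //=; rewrite ?orbF.
  + by apply/negP => Hy; move: Hv; rewrite (H2 Hu v Hy); apply: Rlt_irrefl.
  + by apply/negP => Hz; move: Hv; rewrite (H3 Hu v Hz); apply: Rlt_irrefl.
- case: (I4cases i) Hu => [->|[->|[->|->]]] Hu;
  case: (I4cases j) Hv => [->|[->|[->|->]]] Hv //=;
  match goal with
  | H : ?a = 0 \/ ?b = 0, Hu : 0 < ?a', Hv : 0 < ?b' |- _ =>
      unify a a'; unify b b'; case: H => E; [move: Hu | move: Hv]; rewrite E => /Rlt_irrefl []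
  end.
Qed.

Lemma LOK_mono (V : finType) (e : rel V) (x : V) (Y Z : {set V}) c c' :
  nonneg c' -> (forall w, 0 < c' w -> 0 < c w) -> LOK e x Y Z c -> LOK e x Y Z c'.
Proof.
move=> Hn Hm [H1 [H2 [H3 [H4 [H5 H6]]]]].
have Z0 : forall w, c w = 0 -> c' w = 0.
  move=> w E; case: (Rle_lt_or_eq_dec _ _ (Hn w)) => // Hw; have := Hm w Hw; lra.
split; [|split; [|split; [|split; [|split]]]].
- by move=> u v Hu Hv; apply: H1; apply: Hm.
- by move=> Hy u Hu; apply: Z0; apply: H2 => //; apply: Hm.
- by move=> Hz u Hu; apply: Z0; apply: H3 => //; apply: Hm.
- by case: H4 => E; [left|right]; apply: Z0.
- by case: H5 => E; [left|right]; apply: Z0.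
- by case: H6 => E; [left|right]; apply: Z0.
Qed.

Definition SOK (V : finType) (e : rel V) (c : V + bool -> R) :=
  (forall u v : V, 0 < c (inl u) -> 0 < c (inl v) -> ~~ e u v) /\
  (c (inr true) = 0 \/ c (inr false) = 0).

Lemma SOK_real (V : finType) (e : rel V) q :
  realization (suspension (Ind e)) q -> SOK e q.
Proof.
move=> Hq; have Hn := real_nonneg Hq; case: Hq => [_ [_ [s [[Hs1 Hs2] Hsub]]]]; split.
  move=> u v Hu Hv; apply: Hs1; rewrite inE; apply: Hsub => E;
  first [move: Hu; rewrite E => /Rlt_irrefl [] | move: Hv; rewrite E => /Rlt_irrefl []].
apply: zero_or => // H1 H2; apply: Hs2; split; apply: Hsub => E;
  first [move: H1; rewrite E => /Rlt_irrefl [] | move: H2; rewrite E => /Rlt_irrefl []].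
Qed.

Lemma SOK_susp (V : finType) (e : rel V) c :
  nonneg c -> SOK e c -> suspension (Ind e) (supp c).
Proof.
move=> Hn [H1 H2]; split.
  move=> u v; rewrite !inE => /nzP Hu /nzP Hv.
  by apply: H1; apply: pos_ne.
by move=> [/in_supp A /in_supp B]; case: H2.
Qed.

Lemma SOK_mono (V : finType) (e : rel V) c c' :
  nonneg c' -> (forall w, 0 < c' w -> 0 < c w) -> SOK e c -> SOK e c'.
Proof.
move=> Hn Hm [H1 H2].
have Z0 : forall w, c w = 0 -> c' w = 0.
  move=> w E; case: (Rle_lt_or_eq_dec _ _ (Hn w)) => // Hw; have := Hm w Hw; lra.
split; first by move=> u v Hu Hv; apply: H1; apply: Hm.
by case: H2 => E; [left|right]; apply: Z0.
Qed.

Lemma AGF1 py pa pb pz : 0 <= py -> 0 <= pa -> 0 <= pb -> 0 <= pz ->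
  (py = 0 \/ pa = 0) -> (pa = 0 \/ pb = 0) -> (pb = 0 \/ pz = 0) ->
  0 < Gy (FN pb py pz) (Fx py pz) (FS pa py pz) -> 0 < Hy py pz.
Proof. move=> ???? [?|?] [?|?] [?|?]; subst; move=> ?; unfold Fx, FN, FS, Gy, Hy, Hz, pos in *; mm; lra. Qed.

Lemma AGF2 py pa pb pz : 0 <= py -> 0 <= pa -> 0 <= pb -> 0 <= pz ->
  (py = 0 \/ pa = 0) -> (pa = 0 \/ pb = 0) -> (pb = 0 \/ pz = 0) ->
  0 < Gz (FN pb py pz) (Fx py pz) (FS pa py pz) -> 0 < Hz py pz.
Proof. move=> ???? [?|?] [?|?] [?|?]; subst; move=> ?; unfold Fx, FN, FS, Gz, Hz, pos in *; mm; lra. Qed.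

Lemma AGF3 py pa pb pz : 0 <= py -> 0 <= pa -> 0 <= pb -> 0 <= pz ->
  (py = 0 \/ pa = 0) -> (pa = 0 \/ pb = 0) -> (pb = 0 \/ pz = 0) ->
  Gy (FN pb py pz) (Fx py pz) (FS pa py pz) + Hy py pz = 0 \/
  Ga (FN pb py pz) (Fx py pz) (FS pa py pz) + pa = 0.
Proof.
move=> ???? [?|?] [?|?] [?|?]; subst; unfold Fx, FN, FS, Gy, Ga, Hy, Hz, pos in *; mm;
  first [left; lra | right; lra].
Qed.

Lemma AGF4 py pa pb pz : 0 <= py -> 0 <= pa -> 0 <= pb -> 0 <= pz ->
  (py = 0 \/ pa = 0) -> (pa = 0 \/ pb = 0) -> (pb = 0 \/ pz = 0) ->
  Ga (FN pb py pz) (Fx py pz) (FS pa py pz) + pa = 0 \/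
  Gb (FN pb py pz) (Fx py pz) (FS pa py pz) + pb = 0.
Proof.
move=> ???? [?|?] [?|?] [?|?]; subst; unfold Fx, FN, FS, Ga, Gb, pos in *; mm;
  first [left; lra | right; lra].
Qed.

Lemma AGF5 py pa pb pz : 0 <= py -> 0 <= pa -> 0 <= pb -> 0 <= pz ->
  (py = 0 \/ pa = 0) -> (pa = 0 \/ pb = 0) -> (pb = 0 \/ pz = 0) ->
  Gb (FN pb py pz) (Fx py pz) (FS pa py pz) + pb = 0 \/
  Gz (FN pb py pz) (Fx py pz) (FS pa py pz) + Hz py pz = 0.
Proof.
move=> ???? [?|?] [?|?] [?|?]; subst; unfold Fx, FN, FS, Gb, Gz, Hz, pos in *; mm;
  first [left; lra | right; lra].
Qed.

Lemma AGF py pa pb pz : 0 <= py -> 0 <= pa -> 0 <= pb -> 0 <= pz ->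
  (py = 0 \/ pa = 0) -> (pa = 0 \/ pb = 0) -> (pb = 0 \/ pz = 0) ->
  let n := FN pb py pz in let w := Fx py pz in let s := FS pa py pz in
  (0 < Gy n w s -> 0 < Hy py pz) /\ (0 < Gz n w s -> 0 < Hz py pz) /\
  (Gy n w s + Hy py pz = 0 \/ Ga n w s + pa = 0) /\
  (Ga n w s + pa = 0 \/ Gb n w s + pb = 0) /\
  (Gb n w s + pb = 0 \/ Gz n w s + Hz py pz = 0).
Proof.
move=> H1 H2 H3 H4 H5 H6 H7 /=.
split; [exact: AGF1|split; [exact: AGF2|split; [exact: AGF3|split; [exact: AGF4|exact: AGF5]]]].
Qed.
Definition fmap (V : finType) (x : V) (p : LV x -> R) (w : V + bool) : R :=
  match w with
  | inl v => match (insub v : option {v0 : V | v0 != x}) with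
             | Some u => p (inl u)
             | None => Fx (p (inr o0)) (p (inr o3)) end
  | inr true => FN (p (inr o2)) (p (inr o0)) (p (inr o3))
  | inr false => FS (p (inr o1)) (p (inr o0)) (p (inr o3))
  end.
Arguments fmap {V} x p w.

Definition gmap (V : finType) (x : V) (q : V + bool -> R) (u : LV x) : R :=
  let n := q (inr true) in let w := q (inl x) in let s := q (inr false) in
  match u with
  | inl u => q (inl (val u))
  | inr i => match nat_of_ord i with
             | 0 => Gy n w s | 1 => Ga n w s | 2 => Gb n w s | _ => Gz n w s end
  end.
Arguments gmap {V} x q u.

Definition hmap (V : finType) (x : V) (p : LV x -> R) (u : LV x) : R :=
  match u with
  | inl _ => p u
  | inr i => match nat_of_ord i with
             | 0 => Hy (p (inr o0)) (p (inr o3))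
             | 3 => Hz (p (inr o0)) (p (inr o3))
             | _ => p u end
  end.
Arguments hmap {V} x p u.

Lemma fmap_x (V : finType) (x : V) p : fmap x p (inl x) = Fx (p (inr o0)) (p (inr o3)).
Proof. by rewrite /fmap insubF // eqxx. Qed.

Lemma fmap_u (V : finType) (x : V) p (u : {v : V | v != x}) : fmap x p (inl (val u)) = p (inl u).
Proof. by rewrite /fmap valK. Qed.

Lemma f_real (V : finType) (e : rel V) (x : V) (Y Z : {set V}) p :
  simple_graph e -> Y :|: Z = [set v | e x v] ->
  realization (Ind (lozin_rel e x Y Z)) p -> realization (suspension (Ind e)) (fmap x p).
Proof.
move=> [Hsym Hirr] HYZ Hp.
have Hn := real_nonneg Hp; have [L1 [L2 [L3 [L4 [L5 L6]]]]] := LOK_real Hp.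
have [F1 [F2 F3]] := AF1 (Hn (inr o0)) (Hn (inr o1)) (Hn (inr o2)) (Hn (inr o3)).
have Hfn : nonneg (fmap x p).
  case=> [v|[]] //; case: (Vcases x v) => [->|[u ->]]; by rewrite ?fmap_x ?fmap_u.
apply: real_intro => //.
- case: (Hp) => _ [Hs _]; rewrite -Hs (sumW x) (sumLV p) fmap_x.
  under eq_bigr => u _ do rewrite fmap_u.
  rewrite /= /Fx /FN /FS; ring.
- apply: SOK_susp => //; split; last by apply: AF3.
  have key : forall u : {v : V | v != x}, 0 < fmap x p (inl x) ->
      0 < fmap x p (inl (val u)) -> ~~ e x (val u).
    move=> u; rewrite fmap_x => /(AF2 (Hn _) (Hn _)) [Py Pz] Pu.
    apply/negP => Hxu; have : val u \in Y :|: Z by rewrite HYZ inE.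
    case/setUP => H.
    + by move: Pu; rewrite fmap_u (L2 Py u H) => /Rlt_irrefl.
    + by move: Pu; rewrite fmap_u (L3 Pz u H) => /Rlt_irrefl.
  move=> u v Hu Hv.
  case: (Vcases x u) Hu => [->|[u' ->]] Hu; case: (Vcases x v) Hv => [->|[v' ->]] Hv.
  + by rewrite Hirr.
  + exact: key.
  + by rewrite Hsym; apply: key.
  + by rewrite !fmap_u in Hu Hv; apply: L1.
Qed.
Lemma inYZ (V : finType) (e : rel V) (x : V) (Y Z : {set V}) v :
  Y :|: Z = [set v | e x v] -> (v \in Y) || (v \in Z) -> e x v.
Proof.
move=> HYZ H; have : v \in [set v | e x v] by rewrite -HYZ inE.
by rewrite inE.
Qed.

Lemma g_real (V : finType) (e : rel V) (x : V) (Y Z : {set V}) q :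
  simple_graph e -> Y :|: Z = [set v | e x v] ->
  realization (suspension (Ind e)) q -> realization (Ind (lozin_rel e x Y Z)) (gmap x q).
Proof.
move=> [Hsym Hirr] HYZ Hq.
have Hn := real_nonneg Hq; have [S1 S2] := SOK_real Hq.
have [G1 [G2 [G3 G4]]] := AG1 (Hn (inr true)) (Hn (inl x)) (Hn (inr false)).
have Hgn : nonneg (gmap x q).
  case=> [u|i]; first by apply: Hn.
  by case: (I4cases i) => [->|[->|[->|->]]].
apply: real_intro => //.
- case: (Hq) => _ [Hs _]; rewrite -Hs (sumW x) (sumLV (gmap x q)) /=.
  rewrite (AG2 (Hn (inr true)) (Hn (inl x)) (Hn (inr false)) S2).
  set qx := q (inl x); ring.
- have [A1 A2] := AG3 (Hn (inr true)) (Hn (inl x)) (Hn (inr false)).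
  have [B1 [B2 B3]] := AG4 (Hn (inr true)) (Hn (inl x)) (Hn (inr false)) S2.
  apply: LOK_Ind => //; split; [|split; [|split; [|split; [|split]]]] => //=.
  + by move=> u v Hu Hv; apply: S1.
  + move=> /A1 Pw u Hu.
    case: (Rle_lt_or_eq_dec _ _ (Hn (inl (val u)))) => [Pu|<-] //.
    by have := S1 _ _ Pw Pu; rewrite (inYZ HYZ) // Hu.
  + move=> /A2 Pw u Hu.
    case: (Rle_lt_or_eq_dec _ _ (Hn (inl (val u)))) => [Pu|<-] //.
    by have := S1 _ _ Pw Pu; rewrite (inYZ HYZ) // Hu orbT.
Qed.

Lemma h_real (V : finType) (e : rel V) (x : V) (Y Z : {set V}) p :
  realization (Ind (lozin_rel e x Y Z)) p -> realization (Ind (lozin_rel e x Y Z)) (hmap x p).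
Proof.
move=> Hp; have Hn := real_nonneg Hp.
have [H1 [H2 [H3 H4]]] := AH (Hn (inr o0)) (Hn (inr o3)).
have Hhn : nonneg (hmap x p).
  case=> [u|i]; first by apply: Hn.
  by case: (I4cases i) => [->|[->|[->|->]]] //=; apply: Hn.
apply: real_intro => //.
- case: (Hp) => _ [Hs _]; rewrite -Hs (sumLV (hmap x p)) (sumLV p) /= /Hy; ring.
- apply: LOK_Ind => //; apply: (LOK_mono Hhn _ (LOK_real Hp)).
  case=> [u|i] //; case: (I4cases i) => [->|[->|[->|->]]] //=.
Qed.
Lemma Rabs_lt_bd a b d : Rabs (a - b) < d -> b - d < a < b + d.
Proof. move=> /Rabs_def2 [H1 H2]; lra. Qed.

Ltac nm1 t := let a := fresh "a" in try (set (a := t) in * ) .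
Ltac nmLV p := nm1 (p (inr o0)); nm1 (p (inr o1)); nm1 (p (inr o2)); nm1 (p (inr o3)).

Lemma f_lip (V : finType) (x : V) : lip 8 (fmap x).
Proof.
move=> p q d Hd H w.
have := Rabs_lt_bd (H (inr o0)); have := Rabs_lt_bd (H (inr o1));
have := Rabs_lt_bd (H (inr o2)); have := Rabs_lt_bd (H (inr o3)).
case: w => [v|[]].
- case: (Vcases x v) => [->|[u ->]]; rewrite ?fmap_x ?fmap_u.
  + move=> ????; apply: Rabs_def1; unfold Fx in *; mm; lra.
  + have := Rabs_lt_bd (H (inl u)) => ?????; apply: Rabs_def1; simpl in *; lra.
- move=> ????; apply: Rabs_def1; simpl in *; unfold FN in *; mm; lra.
- move=> ????; apply: Rabs_def1; simpl in *; unfold FS in *; mm; lra.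
Qed.

Lemma g_lip (V : finType) (x : V) : lip 8 (gmap x).
Proof.
move=> p q d Hd H w.
have := Rabs_lt_bd (H (inr true)); have := Rabs_lt_bd (H (inr false));
have := Rabs_lt_bd (H (inl x)).
case: w => [u|i].
- have := Rabs_lt_bd (H (inl (val u))) => ????; apply: Rabs_def1; simpl in *; lra.
- case: (I4cases i) => [->|[->|[->|->]]] /= ???; apply: Rabs_def1; simpl in *;
  unfold Gy, Ga, Gb, Gz, pos in *; mm; lra.
Qed.

Lemma h_lip (V : finType) (x : V) : lip 8 (hmap x).
Proof.
move=> p q d Hd H w.
have := Rabs_lt_bd (H (inr o0)); have := Rabs_lt_bd (H (inr o3)).
case: w => [u|i].
- have := Rabs_lt_bd (H (inl u)) => ???; apply: Rabs_def1; simpl in *; lra.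
- case: (I4cases i) => [->|[->|[->|->]]] /= ??.
  + apply: Rabs_def1; simpl in *; unfold Hy, Hz, pos in *; mm; lra.
  + have := Rabs_lt_bd (H (inr o1)) => ?; apply: Rabs_def1; simpl in *; lra.
  + have := Rabs_lt_bd (H (inr o2)) => ?; apply: Rabs_def1; simpl in *; lra.
  + apply: Rabs_def1; simpl in *; unfold Hy, Hz, pos in *; mm; lra.
Qed.
Lemma gmap_inl (V : finType) (x : V) q (u : {v : V | v != x}) : gmap x q (inl u) = q (inl (val u)).
Proof. by []. Qed.
Lemma hmap_inl (V : finType) (x : V) p (u : {v : V | v != x}) : hmap x p (inl u) = p (inl u).
Proof. by []. Qed.

Lemma sum_pos a b : 0 <= a -> 0 <= b -> 0 < a + b -> 0 < a \/ 0 < b.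
Proof.
move=> Ha Hb H; case: (Rle_lt_or_eq_dec _ _ Ha) => [?|E]; first by left.
by right; rewrite -E in H; lra.
Qed.

Lemma susp_homot (V : finType) (e : rel V) (x : V) (Y Z : {set V}) :
  simple_graph e -> Y :|: Z = [set v | e x v] ->
  homotopic (realization (suspension (Ind e))) (realization (suspension (Ind e)))
    (fun q => fmap x (gmap x q)) (fun q => q).
Proof.
move=> Hg HYZ.
have RA : forall q, realization (suspension (Ind e)) q ->
    realization (suspension (Ind e)) (fmap x (gmap x q)).
  by move=> q Hq; apply: (f_real (Y := Y) (Z := Z)) => //; apply: g_real.
apply: (@homot3 _ _ 64 _ (fun q => q)) => //.
- lra.
- by apply: (lip_mono (C1 := 8 * 8)); [lra | apply: lip_comp; [lra | apply: g_lip | apply: f_lip]].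
- by apply: (lip_mono (C1 := 1)); [lra | apply: lip_id].
- by apply: (lip_mono (C1 := 1)); [lra | apply: lip_id].
- move=> q Hq; have Hn := real_nonneg Hq; have HnA := real_nonneg (RA q Hq).
  apply: K_union => //; first by apply: susp_down.
  have Hc : nonneg (fun w => fmap x (gmap x q) w + q w).
    by move=> w; have := Hn w; have := HnA w; lra.
  apply: SOK_susp => //; apply: (SOK_mono Hc _ (SOK_real Hq)).
  have [_ S2] := SOK_real Hq.
  have [A1 [A2 A3]] := AFG (Hn (inr true)) (Hn (inl x)) (Hn (inr false)) S2.
  move=> w /(sum_pos (HnA w) (Hn w)) [] // H.
  case: w H => [v|[]] H.
  + case: (Vcases x v) H => [->|[u ->]] H.
      by apply: A1; move: H; rewrite fmap_x.
    by move: H; rewrite fmap_u.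
  + by apply: A2.
  + by apply: A3.
- move=> q Hq; have Hn := real_nonneg Hq.
  apply: K_union => //; first by apply: susp_down.
  have Hc : nonneg (fun w => q w + q w) by move=> w; have := Hn w; lra.
  apply: SOK_susp => //; apply: (SOK_mono Hc _ (SOK_real Hq)).
  by move=> w /(sum_pos (Hn w) (Hn w)) [].
Qed.

Lemma L_homot (V : finType) (e : rel V) (x : V) (Y Z : {set V}) :
  simple_graph e -> Y :|: Z = [set v | e x v] ->
  homotopic (realization (Ind (lozin_rel e x Y Z))) (realization (Ind (lozin_rel e x Y Z)))
    (fun p => gmap x (fmap x p)) (fun p => p).
Proof.
move=> Hg HYZ.
have RA : forall p, realization (Ind (lozin_rel e x Y Z)) p ->
    realization (Ind (lozin_rel e x Y Z)) (gmap x (fmap x p)).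
  by move=> p Hp; apply: g_real => //; apply: (f_real (Y := Y) (Z := Z)).
apply: (@homot3 _ _ 64 _ (hmap x)) => //.
- lra.
- by apply: (lip_mono (C1 := 8 * 8)); [lra | apply: lip_comp; [lra | apply: f_lip | apply: g_lip]].
- by apply: (lip_mono (C1 := 8)); [lra | apply: h_lip].
- by apply: (lip_mono (C1 := 1)); [lra | apply: lip_id].
- by move=> p Hp; apply: h_real.
- move=> p Hp; have Hn := real_nonneg Hp; have HnA := real_nonneg (RA p Hp).
  have HnB := real_nonneg (h_real Hp).
  apply: (@K_union (LV x) (Ind (lozin_rel e x Y Z)) _ _ (@Ind_down _ _) HnA HnB).
  have Hc : nonneg (fun w => gmap x (fmap x p) w + hmap x p w).
    by move=> w; have := HnB w; have := HnA w; lra.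
  apply: LOK_Ind => //.
  have [L1 [L2 [L3 [L4 [L5 L6]]]]] := LOK_real Hp.
  have [B1 [B2 [B3 [B4 B5]]]] := AGF (Hn (inr o0)) (Hn (inr o1)) (Hn (inr o2)) (Hn (inr o3)) L4 L5 L6.
  have [H1 [H2 [H3 H4]]] := AH (Hn (inr o0)) (Hn (inr o3)).
  have Py : 0 < gmap x (fmap x p) (inr o0) + hmap x p (inr o0) -> 0 < p (inr o0).
    move=> /(sum_pos (HnA _) (HnB _)) [] H; apply: H3.
      by apply: B1; move: H; rewrite /gmap fmap_x => H; exact: H.
    exact: H.
  have Pz : 0 < gmap x (fmap x p) (inr o3) + hmap x p (inr o3) -> 0 < p (inr o3).
    move=> /(sum_pos (HnA _) (HnB _)) [] H; apply: H4.
      by apply: B2; move: H; rewrite /gmap fmap_x => H; exact: H.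
    exact: H.
  have Pu : forall u, 0 < gmap x (fmap x p) (inl u) + hmap x p (inl u) -> 0 < p (inl u).
    by move=> u; rewrite gmap_inl hmap_inl fmap_u => /(sum_pos (Hn _) (Hn _)) [].
  split; [|split; [|split; [|split; [|split]]]].
  + by move=> u v /Pu Hu /Pu Hv; apply: L1.
  + by move=> /Py H u Hu; rewrite gmap_inl hmap_inl fmap_u (L2 H u Hu); ring.
  + by move=> /Pz H u Hu; rewrite gmap_inl hmap_inl fmap_u (L3 H u Hu); ring.
  + by rewrite /gmap fmap_x; exact: B3.
  + by rewrite /gmap fmap_x; exact: B4.
  + by rewrite /gmap fmap_x; exact: B5.
- move=> p Hp; have Hn := real_nonneg Hp; have HnB := real_nonneg (h_real Hp).
  apply: (@K_union (LV x) (Ind (lozin_rel e x Y Z)) _ _ (@Ind_down _ _) HnB Hn).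
  have Hc : nonneg (fun w => hmap x p w + p w) by move=> w; have := Hn w; have := HnB w; lra.
  apply: LOK_Ind => //; apply: (LOK_mono Hc _ (LOK_real Hp)).
  have [H1 [H2 [H3 H4]]] := AH (Hn (inr o0)) (Hn (inr o3)).
  move=> w /(sum_pos (HnB w) (Hn w)) [] // H.
  case: w H => [u|i] H //.
  case: (I4cases i) H => [->|[->|[->|->]]] H //=.
  + by apply: H3.
  + by apply: H4.
Qed.

Unset Implicit Arguments.
Local Close Scope R_scope.

Theorem mainTheorem14 (V : finType) (e : rel V) (x : V) (Y Z : {set V}) :
  simple_graph e ->
  Y :&: Z = set0 ->
  Y :|: Z = [set v | e x v] ->
  homotopy_equivalent (realization (Ind (lozin_rel e x Y Z)))
                      (realization (suspension (Ind e))).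
Proof.
move=> Hg _ HYZ.
exists (fmap x), (gmap x).
split; [|split; [|split; [|split; [|split]]]].
- by move=> p Hp; exact: (f_real Hg HYZ Hp).
- by move=> q Hq; exact: (@g_real V e x Y Z q Hg HYZ Hq).
- by apply: (lip_cont (C := 8)); [lra | apply: f_lip].
- by apply: (lip_cont (C := 8)); [lra | apply: g_lip].
- exact: L_homot.
- exact: (susp_homot (Y := Y) (Z := Z)).
Qed.
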